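(* Let $A=\{a_1,a_2,\dots,a_k\}$ be a set of $k$ distinct positive integers with $\gcd(a_1,\dots,a_k)=1$. Then, as $n\to\infty$, $$N^p_A(n)\sim\frac{1}{k!}\,\frac{\frac{1}{a_1}+\frac{1}{a_2}+\cdots+\frac{1}{a_k}}{a_1a_2\cdots a_k}\,n^k.$$
   Context: $N^p_A(n)$ is the total number of parts, summed over all partitions of $n$ (unordered sequences of positive integers summing to $n$) with all parts in $A$. *)

(* Defs.v *)
From mathcomp Require Import all_boot.
From Stdlib Require Import Reals.
From Coquelicot Require Import Coquelicot.

Set Implicit Arguments.
Unset Strict Implicit.
Unset Printing Implicit Defensive.

(* A partition of n with all parts in A = [:: a_0; ...; a_(k-1)] (distinct
   positive integers) is determined by its multiplicity vector m, with
   \sum_i m_i * a_i = n; its number of parts is \sum_i m_i.  Since every part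
   is >= 1, each multiplicity is <= n, so ranging m over 'I_n.+1 loses
   nothing. *)
Definition Np (A : seq nat) (n : nat) : nat :=
  (\sum_(m : {ffun 'I_(size A) -> 'I_n.+1}
          | \sum_(i < size A) (m i : nat) * nth 0%nat A i == n)
     \sum_(i < size A) (m i : nat))%nat.

Definition gcd_seq (A : seq nat) : nat := foldr gcdn 0%nat A.

Definition leading_const (A : seq nat) : R :=
  (/ INR ((size A)`!)) *
  (foldr (fun a s => / INR a + s) 0 A)%R /
  (foldr (fun a p => INR a * p) 1 A)%R.

(* Main.v *)
Require Import Defs.
From mathcomp Require Import all_boot.
From Stdlib Require Import Reals.
From Coquelicot Require Import Coquelicot.
From mathcomp Require Import zify.
From Stdlib Require Import Lra Psatz.
Set Implicit Arguments. Unset Strict Implicit. Unset Printing Implicit Defensive.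
Local Open Scope nat_scope.

Definition fcons k B (x : 'I_B) (g : {ffun 'I_k -> 'I_B}) : {ffun 'I_k.+1 -> 'I_B} :=
  [ffun i => match unlift ord0 i with Some j => g j | None => x end].

Lemma fcons0 k B x (g : {ffun 'I_k -> 'I_B}) : fcons x g ord0 = x.
Proof. by rewrite ffunE unlift_none. Qed.
Lemma fconsS k B x (g : {ffun 'I_k -> 'I_B}) j : fcons x g (lift ord0 j) = g j.
Proof. by rewrite ffunE liftK. Qed.

Lemma big_fcons k B (P : pred {ffun 'I_k.+1 -> 'I_B}) (G : {ffun 'I_k.+1 -> 'I_B} -> nat) :
  \sum_(f | P f) G f = \sum_(x < B) \sum_(g | P (fcons x g)) G (fcons x g).
Proof.
rewrite pair_big_dep /=.
rewrite (reindex (fun p : 'I_B * {ffun 'I_k -> 'I_B} => fcons p.1 p.2)) //.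
exists (fun f : {ffun 'I_k.+1 -> 'I_B} => (f ord0, [ffun j => f (lift ord0 j)])).
  move=> [x g] _ /=; rewrite fcons0; congr pair; apply/ffunP => j; by rewrite ffunE fconsS.
move=> f _ /=; apply/ffunP => i; rewrite ffunE.
case: unliftP => [j ->|->]; by rewrite ?ffunE.
Qed.

Definition wgt (A : seq nat) B (g : {ffun 'I_(size A) -> 'I_B}) :=
  \sum_(i < size A) (g i : nat) * nth 0 A i.
Definition tot k B (g : {ffun 'I_k -> 'I_B}) := \sum_(i < k) (g i : nat).

Definition Ccf A B N := \sum_(g : {ffun 'I_(size A) -> 'I_B} | wgt g <= N) 1.
Definition Wcf A B N := \sum_(g : {ffun 'I_(size A) -> 'I_B} | wgt g <= N) tot g.
Definition Nf A B n := \sum_(g : {ffun 'I_(size A) -> 'I_B} | wgt g == n) tot g.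

Lemma Np_Nf A n : Np A n = Nf A n.+1 n.
Proof. by []. Qed.

Lemma wgt_fcons a A B x (g : {ffun 'I_(size A) -> 'I_B}) :
  wgt (A := a :: A) (fcons x g) = x * a + wgt g.
Proof. by rewrite /wgt big_ord_recl fcons0 /=; congr addn; apply: eq_bigr => j _; rewrite fconsS. Qed.

Lemma tot_fcons k B x (g : {ffun 'I_k -> 'I_B}) : tot (fcons x g) = x + tot g.
Proof. by rewrite /tot big_ord_recl fcons0; congr addn; apply: eq_bigr => j _; rewrite fconsS. Qed.

Definition Tsum (h : nat -> nat) a N := \sum_(x < N.+1 | x * a <= N) h (N - x * a).
Definition Xsum (h : nat -> nat) a N := \sum_(x < N.+1 | x * a <= N) x * h (N - x * a).

Fixpoint ccum (A : seq nat) : nat -> nat :=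
  match A with [::] => fun _ => 1 | a :: A' => Tsum (ccum A') a end.
Fixpoint wcum (A : seq nat) : nat -> nat :=
  match A with [::] => fun _ => 0
  | a :: A' => fun N => Xsum (ccum A') a N + Tsum (wcum A') a N end.

Lemma narrow (F : nat -> nat) a N B : 0 < a -> N < B ->
  \sum_(x < B | x * a <= N) F x = \sum_(x < N.+1 | x * a <= N) F x.
Proof.
move=> a0 NB; rewrite (@big_ord_widen_cond nat 0 addn N.+1 B (fun x => x * a <= N) F NB).
apply: eq_bigl => x; case H: (x * a <= N) => //=; apply/esym.
have: x <= x * a by rewrite leq_pmulr. lia.
Qed.


Lemma Ccf_Wcf A B N : all (fun a => 0 < a) A -> N < B ->
  Ccf A B N = ccum A N /\ Wcf A B N = wcum A N.
Proof.
elim: A N => [|a A IH] N /= apos NB.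
  have w0 : forall g : {ffun 'I_0 -> 'I_B}, wgt (A := [::]) g = 0 by move=> g; rewrite /wgt big_ord0.
  have t0 : forall g : {ffun 'I_0 -> 'I_B}, tot g = 0 by move=> g; rewrite /tot big_ord0.
  split.
    rewrite /Ccf (eq_bigl xpredT) => [|g]; last by rewrite w0.
    by rewrite sum1_card card_ffun !card_ord.
  by rewrite /Wcf big1 // => g _; rewrite t0.
case/andP: apos => a0 apos.
have key : forall G : nat -> {ffun 'I_(size A) -> 'I_B} -> nat,
  \sum_(f : {ffun 'I_(size (a :: A)) -> 'I_B} | wgt f <= N) G (f ord0) [ffun j => f (lift ord0 j)]
  = \sum_(x < N.+1 | x * a <= N) \sum_(g | wgt g <= N - x * a) G x g.
  move=> G; rewrite big_fcons.
  rewrite -(narrow (fun x => \sum_(g | wgt g <= N - x * a) G x g) a0 NB) [RHS]big_mkcond /=; apply: eq_bigr => x _.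
  case: ifP => xa.
    apply: eq_big => [g|g _]; first by rewrite wgt_fcons; lia.
    rewrite fcons0; congr G; apply/ffunP => j; by rewrite ffunE fconsS.
  rewrite big_pred0 // => g; rewrite wgt_fcons; lia.
split.
  have := key (fun _ _ => 1); rewrite /Ccf /= => ->; apply: eq_bigr => x _.
  by case: (IH (N - x * a) apos (leq_ltn_trans (leq_subr _ _) NB)).
have := key (fun x g => x + tot g).
rewrite /Wcf /Tsum /Xsum (eq_bigr (fun f => tot f)).
  move=> ->; rewrite -big_split /=; apply: eq_bigr => x _.
  rewrite big_split /= -/(Wcf A B _).
  rewrite (_ : \sum_(i | wgt i <= N - x * a) (x:nat) = x * Ccf A B (N - x*a)); last first.
    by rewrite /Ccf big_distrr /=; apply: eq_bigr => ? _; rewrite muln1.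
  by case: (IH (N - x * a) apos (leq_ltn_trans (leq_subr _ _) NB)) => -> ->.
move=> f _; rewrite /tot big_ord_recl; congr addn; apply: eq_bigr => j _; by rewrite ffunE.
Qed.

Lemma Wcf_S A B N : Wcf A B N.+1 = Wcf A B N + Nf A B N.+1.
Proof.
rewrite /Wcf /Nf (bigID (fun g => wgt g <= N)) /=; congr addn; apply: eq_bigl => g.
  by case: (ltngtP (wgt g) N.+1) => H; lia.
by case: (ltngtP (wgt g) N.+1) => H; lia.
Qed.

Lemma Wcf_0 A B : Wcf A B 0 = Nf A B 0.
Proof. by apply: eq_bigl => g; rewrite leqn0. Qed.

Lemma Nf_wcum A B n : all (fun a => 0 < a) A -> n < B ->
  Nf A B n = if n is n'.+1 then wcum A n'.+1 - wcum A n' else wcum A 0.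
Proof.
move=> apos nB; case: n nB => [|n] nB.
  by rewrite -Wcf_0; case: (Ccf_Wcf apos nB).
have := Wcf_S A B n.
case: (Ccf_Wcf apos nB) => _ ->.
case: (Ccf_Wcf apos (ltnW nB)) => _ ->.
move=> ->; by rewrite addKn.
Qed.

Lemma Np_wcum0 A : all (fun a => 0 < a) A -> Np A 0 = wcum A 0.
Proof. by move=> apos; rewrite Np_Nf (Nf_wcum apos). Qed.

Lemma Np_wcumS A N : all (fun a => 0 < a) A -> wcum A N.+1 = wcum A N + Np A N.+1.
Proof.
move=> apos; rewrite Np_Nf (Nf_wcum apos) //.
have := Wcf_S A N.+2 N.
case: (Ccf_Wcf apos (ltnSn N.+1)) => _ ->.
case: (Ccf_Wcf apos (leqW (ltnSn N))) => _ -> ->.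
by rewrite addKn.
Qed.

Lemma Nf_Np A B n : all (fun a => 0 < a) A -> n < B -> Nf A B n = Np A n.
Proof. by move=> apos nB; rewrite Np_Nf !(Nf_wcum apos). Qed.

Definition repr (A : seq nat) r :=
  exists mm : seq nat, \sum_(i < size A) nth 0 mm i * nth 0 A i = r.

Lemma term_le k (F : 'I_k -> nat) i : F i <= \sum_(j < k) F j.
Proof. by rewrite (bigD1 i) //= leq_addr. Qed.

Lemma Np_mono A n r : all (fun a => 0 < a) A -> repr A r -> Np A n <= Np A (n + r).
Proof.
move=> apos [mm Hr].
set b := n + r.
rewrite -(@Nf_Np A b.+1 n apos) ?ltnS ?leq_addr // -(@Nf_Np A b.+1 (n + r) apos) //.
have Apos : forall i : 'I_(size A), 0 < nth 0 A i.
  by move=> i; apply: (allP apos); rewrite mem_nth.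
set phi := fun g : {ffun 'I_(size A) -> 'I_b.+1} =>
  [ffun i => (inord (g i + nth 0 mm i) : 'I_b.+1)].
have bound : forall g : {ffun 'I_(size A) -> 'I_b.+1}, wgt g == n -> forall i, g i + nth 0 mm i <= b.
  move=> g /eqP wg i; rewrite /b leq_add //.
    apply: leq_trans (leq_pmulr _ (Apos i)) _.
    apply: leq_trans (term_le (fun i => (g i : nat) * nth 0 A i) i) _; by rewrite /wgt in wg; rewrite wg.
  apply: leq_trans (leq_pmulr _ (Apos i)) _.
  apply: leq_trans (term_le (fun i => nth 0 mm i * nth 0 A i) i) _; by rewrite Hr.
have phiE : forall g : {ffun 'I_(size A) -> 'I_b.+1}, wgt g == n -> forall i, (phi g i : nat) = g i + nth 0 mm i.
  by move=> g wg i; rewrite ffunE inordK // ltnS bound.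
set S := [set g : {ffun 'I_(size A) -> 'I_b.+1} | wgt g == n].
have memS : forall g, (g \in S) = (wgt g == n) by move=> g; rewrite inE.
have inj : {in S &, injective phi}.
  move=> g1 g2; rewrite !memS => w1 w2 E; apply/ffunP => i.
  have := congr1 (fun f : {ffun 'I_(size A) -> 'I_b.+1} => (f i : nat)) E.
  by rewrite /= !phiE // => /addIn H; apply: val_inj.
have wphi : forall g, g \in S -> wgt (phi g) = n + r.
  move=> g; rewrite memS => wg; rewrite /wgt -Hr -(eqP wg) -big_split /=.
  by apply: eq_bigr => i _; rewrite phiE // mulnDl.
apply: (@leq_trans (\sum_(g in S) tot (phi g))).
  rewrite [X in X <= _]/Nf (_ : \sum_(g | wgt g == n) tot g = \sum_(g in S) tot g); last first.
    by apply: eq_bigl => g; rewrite memS.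
  by apply: leq_sum => g gS; apply: leq_sum => i _; rewrite phiE ?leq_addr // -memS.
rewrite -big_imset // /Nf [X in _ <= X](bigID (mem (phi @: S))) /=.
apply: leq_trans (leq_addr _ _); apply: eq_leq; apply: eq_bigl => h.
case hS: (h \in phi @: S); rewrite ?andbF ?andbT //.
by case/imsetP: hS => g gS ->; rewrite wphi // eqxx.
Qed.

Lemma frob_gen A : all (fun a => 0 < a) A ->
  exists F, forall t, F <= t -> repr A (t * gcd_seq A).
Proof.
elim: A => [|a A IH] /=.
  by move=> _; exists 0 => t _; exists [::]; rewrite big_ord0 muln0.
case/andP => a0 apos; case: (IH apos) => F' HF'.
set g' := gcd_seq A.
have sumcons : forall x mm', \sum_(i < (size A).+1) nth 0 (x :: mm') i * nth 0 (a :: A) i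
    = x * a + \sum_(i < size A) nth 0 mm' i * nth 0 A i.
  by move=> x mm'; rewrite big_ord_recl.
case g'0: (g' == 0).
  rewrite (eqP g'0) gcdn0; exists 0 => t _; exists [:: t].
  rewrite sumcons big1 ?addn0 // => i _; by rewrite nth_nil.
have g'pos : 0 < g' by rewrite lt0n g'0.
case: (egcdnP g' a0) => u v Huv _.
set g := gcdn a g' in Huv *.
have gpos : 0 < g by rewrite gcdn_gt0 a0.
set d := g' %/ g.
have g'E : g' = d * g by rewrite /d divnK // dvdn_gcdr.
have dpos : 0 < d by move: g'pos; rewrite g'E muln_gt0 => /andP[].
exists (d * (d * v + F')) => t Ht.
have tE := divn_eq t d.
set q := t %/ d in tE; set s := t %% d in tE.
have sd : s < d by rewrite /s ltn_pmod.
have qge : d * v + F' <= q by rewrite /q leq_divRL // mulnC. 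
have svq : s * v <= d * v by rewrite leq_mul2r ltnW ?orbT.
case: (HF' (q - s * v)); first by lia.
move=> mm' Hmm'; exists (s * u :: mm'); rewrite sumcons Hmm'.
rewrite -/g' tE. move: Huv; rewrite g'E => Huv. clearbody q s d g g'. subst g'. nia.
Qed.

Lemma frob A : all (fun a => 0 < a) A -> gcd_seq A = 1 ->
  exists F, forall r, F <= r -> repr A r.
Proof.
move=> apos g1; case: (frob_gen apos) => F HF; exists F => r Hr.
by have := HF r Hr; rewrite g1 muln1.
Qed.

Lemma shift_sum (F : nat -> nat) a N : 0 < a ->
  \sum_(i < N | bump 0 i * a <= N) F (bump 0 i)
  = if a <= N then \sum_(i < (N - a).+1 | i * a <= N - a) F i.+1 else 0.
Proof.
move=> a0; case: ifP => aN.
  rewrite -(narrow (fun i => F i.+1) a0 (_ : N - a < N)); last by lia.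
  apply: eq_big => [i|i _]; rewrite /bump leq0n add1n //.
  rewrite mulSn; lia.
rewrite big_pred0 // => i; rewrite /bump leq0n add1n mulSn; lia.
Qed.

Lemma Tsum_rec h a N : 0 < a ->
  Tsum h a N = h N + (if a <= N then Tsum h a (N - a) else 0).
Proof.
move=> a0; rewrite /Tsum big_mkcond big_ord_recl -big_mkcond /= mul0n subn0; congr addn.
rewrite (shift_sum (fun i => h (N - i * a)) N a0); case: ifP => // aN.
apply: eq_bigr => i _; congr h; rewrite mulSn; lia.
Qed.

Lemma Xsum_rec h a N : 0 < a ->
  Xsum h a N = if a <= N then Xsum h a (N - a) + Tsum h a (N - a) else 0.
Proof.
move=> a0; rewrite /Xsum big_mkcond big_ord_recl -big_mkcond /= mul0n add0n.
rewrite (shift_sum (fun i => i * h (N - i * a)) N a0); case: ifP => // aN.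
rewrite /Tsum -big_split /=; apply: eq_bigr => i _.
rewrite mulSn mulSnr (_ : N - (i * a + a) = N - a - i * a); first by rewrite addnC. lia.
Qed.

Lemma Xsum_TT h a N : 0 < a ->
  Xsum h a N = if a <= N then Tsum (Tsum h a) a (N - a) else 0.
Proof.
move=> a0; elim: N {-2}N (leqnn N) => [|M IH] N NM.
  by rewrite Xsum_rec //; case: ifP => //; lia.
rewrite Xsum_rec //; case: ifP => // aN.
rewrite IH; last by lia.
rewrite [in RHS]Tsum_rec //; case: ifP => H; rewrite addnC //.
Qed.

Lemma wcum_cons a A N : 0 < a ->
  wcum (a :: A) N = (if a <= N then Tsum (ccum (a :: A)) a (N - a) else 0) + Tsum (wcum A) a N.
Proof. by move=> a0 /=; rewrite Xsum_TT. Qed.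

Local Open Scope R_scope.

Lemma I2 m y z : 0 <= z <= y -> y ^ m.+1 - z ^ m.+1 <= INR m.+1 * (y - z) * y ^ m.
Proof.
move=> [z0 zy]; elim: m => [|m IH]; first by simpl; lra.
have hz : z ^ m.+1 <= y ^ m.+1 by apply: pow_incr; lra.
have hy : 0 <= y ^ m by apply: pow_le; lra.
rewrite S_INR.
replace (y ^ m.+2 - z ^ m.+2) with (y * (y ^ m.+1 - z ^ m.+1) + z ^ m.+1 * (y - z)) by (simpl; ring).
replace ((INR m.+1 + 1) * (y - z) * y ^ m.+1) with (y * (INR m.+1 * (y - z) * y ^ m) + y ^ m.+1 * (y - z)) by (simpl; ring).
have := Rmult_le_compat_l y _ _ (ltac:(lra) : 0 <= y) IH.
have := Rmult_le_compat_r (y - z) _ _ (ltac:(lra) : 0 <= y - z) hz.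
lra.
Qed.

Lemma I3 m y z : 0 <= z <= y -> INR m.+1 * (y - z) * z ^ m <= y ^ m.+1 - z ^ m.+1.
Proof.
move=> [z0 zy]; elim: m => [|m IH]; first by simpl; lra.
have hz : 0 <= z ^ m by apply: pow_le; lra.
rewrite S_INR.
replace (y ^ m.+2 - z ^ m.+2) with (y * (y ^ m.+1 - z ^ m.+1) + z ^ m.+1 * (y - z)) by (simpl; ring).
replace ((INR m.+1 + 1) * (y - z) * z ^ m.+1) with (z * (INR m.+1 * (y - z) * z ^ m) + z ^ m.+1 * (y - z)) by (simpl; ring).
have h1 : 0 <= INR m.+1 * (y - z) * z ^ m.
  apply: Rmult_le_pos; last done; apply: Rmult_le_pos; [apply: pos_INR|lra].
have := Rmult_le_compat_l y _ _ (ltac:(lra) : 0 <= y) IH.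
have := Rmult_le_compat_r (INR m.+1 * (y - z) * z ^ m) z y h1 zy.
lra.
Qed.

Lemma I1 m y a : 0 <= y -> 0 <= a -> y ^ m.+1 + INR m.+1 * a * y ^ m <= (y + a) ^ m.+1.
Proof.
move=> y0 a0; have := @I3 m (y + a) y (ltac:(lra)).
replace (y + a - y) with a by ring; lra.
Qed.

Definition pos x := Rmax 0 x.
Lemma pos_ge0 x : 0 <= pos x. Proof. exact: Rmax_l. Qed.
Lemma posE x : 0 <= x -> pos x = x. Proof. by move=> h; rewrite /pos Rmax_right. Qed.
Lemma pos0 x : x <= 0 -> pos x = 0. Proof. by move=> h; rewrite /pos Rmax_left. Qed.
Lemma pos_le x : x <= pos x. Proof. exact: Rmax_r. Qed.

Lemma INR_subn (m n : nat) : (n <= m)%nat -> INR (m - n)%nat = INR m - INR n.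
Proof. by move/leP=> h; rewrite -minus_INR. Qed.
Lemma INR_addn (m n : nat) : INR (m + n)%nat = INR m + INR n.
Proof. exact: plus_INR. Qed.
Lemma INR_muln (m n : nat) : INR (m * n)%nat = INR m * INR n.
Proof. exact: mult_INR. Qed.
Lemma INR_pos (a : nat) : (0 < a)%nat -> 0 < INR a.
Proof. by move/ltP=> h; apply: lt_0_INR. Qed.

Lemma Tsum_up (h : nat -> nat) a m c D : (0 < a)%nat -> 0 <= c -> 0 <= D ->
  (forall n, INR (h n) <= c * (INR n + D) ^ m) ->
  forall N, INR (Tsum h a N) <= c / (INR a * INR m.+1) * (INR N + D + INR a) ^ m.+1.
Proof.
move=> a0 c0 D0 hb; set K := c / (INR a * INR m.+1).
have ap := INR_pos a0.
have mp : 0 < INR m.+1 by apply: lt_0_INR; lia.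
have K0 : 0 <= K by rewrite /K; apply: Rmult_le_pos => //; apply: Rlt_le; apply: Rinv_0_lt_compat; nra.
have KE : K * (INR m.+1 * INR a) = c by rewrite /K; field; lra.
elim/ltn_ind => N IH; rewrite Tsum_rec // INR_addn.
have y0 : 0 <= INR N + D by have := pos_INR N; lra.
have Hy := I1 m y0 (Rlt_le _ _ ap).
have Hy' := Rmult_le_compat_l K _ _ K0 Hy.
have ym : 0 <= (INR N + D) ^ m.+1 by apply: pow_le.
have hN := hb N.
case: ifP => aN.
  have := IH (N - a)%nat ltac:(lia); rewrite INR_subn //.
  replace (INR N - INR a + D + INR a) with (INR N + D) by ring.
  have : K * (INR m.+1 * INR a * (INR N + D) ^ m) = c * (INR N + D) ^ m by rewrite -KE; ring.
  nra.
have : K * (INR m.+1 * INR a * (INR N + D) ^ m) = c * (INR N + D) ^ m by rewrite -KE; ring.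
have : 0 <= K * (INR N + D) ^ m.+1 by apply: Rmult_le_pos.
have -> : INR 0 = 0 by []. nra.
Qed.

Lemma Tsum_lo (h : nat -> nat) a m c D : (0 < a)%nat -> 0 <= c -> 0 <= D ->
  (forall n, c * pos (INR n - D) ^ m <= INR (h n)) ->
  forall N, c / (INR a * INR m.+1) * pos (INR N - D) ^ m.+1 <= INR (Tsum h a N).
Proof.
move=> a0 c0 D0 hb; set K := c / (INR a * INR m.+1).
have ap := INR_pos a0.
have mp : 1 <= INR m.+1 by rewrite S_INR; have := pos_INR m; lra.
have K0 : 0 <= K by rewrite /K; apply: Rmult_le_pos => //; apply: Rlt_le; apply: Rinv_0_lt_compat; nra.
have KE : K * (INR m.+1 * INR a) = c by rewrite /K; field; lra.
elim/ltn_ind => N IH; rewrite Tsum_rec // INR_addn.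
set y := pos (INR N - D).
have y0 : 0 <= y := pos_ge0 _.
have ym : 0 <= y ^ m by apply: pow_le.
have hN : c * y ^ m <= INR (h N) := hb N.
have Tge0 : 0 <= INR (if (a <= N)%nat then Tsum h a (N - a) else 0%nat) by apply: pos_INR.
have cy : K * (INR m.+1 * INR a * y ^ m) = c * y ^ m by rewrite -KE; ring.
case: (Rle_lt_dec y (INR a)) => ya.
  have : K * (y * y ^ m) <= K * (INR m.+1 * INR a * y ^ m).
    apply: Rmult_le_compat_l => //; apply: Rmult_le_compat_r => //; nra.
  simpl pow; nra.
have Ny : y = INR N - D.
  rewrite /y posE //; apply: Rnot_lt_le => H; rewrite /y pos0 in ya; lra.
have aN : (a <= N)%nat.
  apply/leP; apply: INR_le; lra.
rewrite aN in Tge0 *.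
have := IH (N - a)%nat ltac:(lia); rewrite INR_subn // -/K.
have -> : pos (INR N - INR a - D) = y - INR a by rewrite posE; lra.
have := I2 m (ltac:(lra) : 0 <= y - INR a <= y).
replace (y - (y - INR a)) with (INR a) by ring.
move=> H2; have := Rmult_le_compat_l K _ _ K0 H2.
nra.
Qed.

Lemma pos_mono x y : x <= y -> pos x <= pos y.
Proof. by move=> h; rewrite /pos; apply: Rle_max_compat_l. Qed.

Lemma up_weaken c x y m : 0 <= c -> 0 <= x <= y -> c * x ^ m <= c * y ^ m.
Proof. by move=> c0 [x0 xy]; apply: Rmult_le_compat_l => //; apply: pow_incr. Qed.

Lemma lo_weaken c x y m : 0 <= c -> x <= y -> c * pos x ^ m <= c * pos y ^ m.
Proof.
move=> c0 xy; apply: Rmult_le_compat_l => //; apply: pow_incr; split; first exact: pos_ge0.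
exact: pos_mono.
Qed.

Fixpoint cA (A : seq nat) : R :=
  match A with [::] => 1 | a :: A' => cA A' / (INR a * INR (size A').+1) end.
Fixpoint wA (A : seq nat) : R :=
  match A with [::] => 0
  | a :: A' => (wA A' + cA A' / (INR a * INR (size A').+1)) / (INR a * INR (size A').+2) end.

Lemma cA_wA_ge0 A : all (fun a => 0 < a)%nat A -> 0 <= cA A /\ 0 <= wA A.
Proof.
elim: A => [|a A IH]; first by simpl; lra.
case/andP => a0 apos; case: (IH apos) => c0 w0.
change (0 <= cA A / (INR a * INR (size A).+1) /\ 0 <= (wA A + cA A / (INR a * INR (size A).+1)) / (INR a * INR (size A).+2)).
have ap := INR_pos a0.
have k1 : 0 < INR (size A).+1 by apply: lt_0_INR; lia.
have k2 : 0 < INR (size A).+2 by apply: lt_0_INR; lia.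
have c1 : 0 <= cA A / (INR a * INR (size A).+1).
  apply: Rmult_le_pos => //; apply: Rlt_le; apply: Rinv_0_lt_compat; nra.
split => //; apply: Rmult_le_pos; first lra.
apply: Rlt_le; apply: Rinv_0_lt_compat; nra.
Qed.

Lemma invariant A : all (fun a => 0 < a)%nat A ->
  (forall N, cA A * pos (INR N - INR (sumn A)) ^ size A <= INR (ccum A N)
             <= cA A * (INR N + INR (sumn A)) ^ size A) /\
  (forall N, wA A * pos (INR N - 2 * INR (sumn A)) ^ (size A).+1 <= INR (wcum A N)
             <= wA A * (INR N + 2 * INR (sumn A)) ^ (size A).+1).
Proof.
elim: A => [|a A IH].
  move=> _; split => N /=; lra.
case/andP => a0 apos; case: (IH apos) => IHc IHw.
change ((forall N, cA A / (INR a * INR (size A).+1) * pos (INR N - INR (a + sumn A)) ^ (size A).+1 <= INR (Tsum (ccum A) a N)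
             <= cA A / (INR a * INR (size A).+1) * (INR N + INR (a + sumn A)) ^ (size A).+1) /\
  (forall N, (wA A + cA A / (INR a * INR (size A).+1)) / (INR a * INR (size A).+2) * pos (INR N - 2 * INR (a + sumn A)) ^ (size A).+2 <= INR (wcum (a :: A) N)
             <= (wA A + cA A / (INR a * INR (size A).+1)) / (INR a * INR (size A).+2) * (INR N + 2 * INR (a + sumn A)) ^ (size A).+2)).
have [c0' w0'] := cA_wA_ge0 apos.
have ap := INR_pos a0.
set k := size A; set S := INR (sumn A).
have S0 : 0 <= S by apply: pos_INR.
rewrite INR_addn -/S.
set c' := cA A / (INR a * INR k.+1).
have k1 : 0 < INR k.+1 by apply: lt_0_INR; lia.
have c'0 : 0 <= c' by apply: Rmult_le_pos => //; apply: Rlt_le; apply: Rinv_0_lt_compat; nra.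
have Nge0 : forall N, 0 <= INR N := pos_INR.
have ccU : forall N, INR (Tsum (ccum A) a N) <= c' * (INR N + (INR a + S)) ^ k.+1.
  move=> N; apply: Rle_trans (Tsum_up a0 c0' S0 (fun n => proj2 (IHc n)) N) _.
  apply: up_weaken => //; have := Nge0 N; lra.
have ccL : forall N, c' * pos (INR N - (INR a + S)) ^ k.+1 <= INR (Tsum (ccum A) a N).
  move=> N; apply: Rle_trans _ (Tsum_lo a0 c0' S0 (fun n => proj1 (IHc n)) N).
  apply: lo_weaken => //; lra.
split; first by move=> N; split; [apply: ccL|apply: ccU].
move=> N; rewrite wcum_cons // INR_addn.
have c'S : 0 <= INR a + S by lra.
have P1U := Tsum_up a0 c'0 c'S ccU.
have P1L := Tsum_lo a0 c'0 c'S ccL.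
have P2U := Tsum_up a0 w0' (ltac:(lra) : 0 <= 2 * S) (fun n => proj2 (IHw n)) N.
have P2L := Tsum_lo a0 w0' (ltac:(lra) : 0 <= 2 * S) (fun n => proj1 (IHw n)) N.
set K1 := c' / (INR a * INR k.+2) in P1U P1L.
set K2 := wA A / (INR a * INR k.+2) in P2U P2L.
have k2 : 0 < INR k.+2 by apply: lt_0_INR; lia.
have K10 : 0 <= K1 by apply: Rmult_le_pos => //; apply: Rlt_le; apply: Rinv_0_lt_compat; nra.
have K20 : 0 <= K2 by apply: Rmult_le_pos => //; apply: Rlt_le; apply: Rinv_0_lt_compat; nra.
have -> : (wA A + c') / (INR a * INR k.+2) = K1 + K2 by rewrite /K1 /K2; field; lra.
set E := 2 * (INR a + S).
have hP2U : INR (Tsum (wcum A) a N) <= K2 * (INR N + E) ^ k.+2.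
  apply: Rle_trans P2U _; apply: up_weaken => //; have := Nge0 N; rewrite /E; lra.
have hP2L : K2 * pos (INR N - E) ^ k.+2 <= INR (Tsum (wcum A) a N).
  apply: Rle_trans _ P2L; apply: lo_weaken => //; rewrite /E; lra.
have posle : 0 <= pos (INR N - E) ^ k.+2 by apply: pow_le; apply: pos_ge0.
have Ele : 0 <= (INR N + E) ^ k.+2 by apply: pow_le; have := Nge0 N; rewrite /E; lra.
case: ifP => aN; change (ccum (a :: A)) with (Tsum (ccum A) a).
  have := P1U (N - a)%nat; have := P1L (N - a)%nat; rewrite INR_subn // => L1 U1.
  split.
    suff : K1 * pos (INR N - E) ^ k.+2 <= K1 * pos (INR N - INR a - (INR a + S)) ^ k.+2 by lra.
    apply: lo_weaken => //; rewrite /E; lra.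
  suff : K1 * (INR N - INR a + (INR a + S) + INR a) ^ k.+2 <= K1 * (INR N + E) ^ k.+2 by lra.
  apply: up_weaken => //; have := Nge0 N; rewrite /E; lra.
have -> : INR 0 = 0 by [].
have : K1 * pos (INR N - E) ^ k.+2 = 0.
  have : (N < a)%nat by rewrite ltnNge aN.
  move/ltP/lt_INR => H.
  rewrite pos0; last by rewrite /E; lra.
  rewrite pow_i ?Rmult_0_r //; lia.
have : 0 <= K1 * (INR N + E) ^ k.+2 by apply: Rmult_le_pos.
lra.
Qed.

Definition sq (N : nat) : nat := Nat.sqrt N.

Lemma sq_sq N : (sq N * sq N <= N)%nat.
Proof. by have [h _] := Nat.sqrt_spec N (le_0_n N); apply/leP. Qed.

Lemma sq_unb m : exists N0, forall N, (N0 <= N)%nat -> (m <= sq N)%nat.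
Proof.
exists (m * m)%nat => N h; apply/leP; rewrite -{1}(Nat.sqrt_square m).
by apply: Nat.sqrt_le_mono; apply/leP.
Qed.

Lemma arch (x : R) : exists m : nat, x < INR m.
Proof. have [n hn] := INR_archimed 1 x Rlt_0_1; exists n; lra. Qed.

Lemma lim_inv_sq : is_lim_seq (fun N => / INR (sq N)) 0.
Proof.
apply/is_lim_seq_spec => eps.
have [m hm] := arch (/ eps).
have [N0 HN0] := sq_unb m.+1.
exists N0 => N /leP hN; have := HN0 N hN => hs.
have e0 := cond_pos eps.
have ie : 0 < / eps by apply: Rinv_0_lt_compat.
have hs' : INR m.+1 <= INR (sq N) by apply: le_INR; apply/leP.
have m1 : INR m < INR m.+1 by apply: lt_INR; lia.
have sp : 0 < INR (sq N) by lra.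
rewrite Rminus_0_r Rabs_pos_eq; last by apply: Rlt_le; apply: Rinv_0_lt_compat.
rewrite -(Rinv_inv eps); apply: Rinv_lt_contravar; first by nra.
lra.
Qed.

Lemma lim_sq_N : is_lim_seq (fun N => INR (sq N) / INR N) 0.
Proof.
apply: (is_lim_seq_le_le_loc (fun _ => 0) _ (fun N => / INR (sq N))); last first.
- exact: lim_inv_sq.
- exact: is_lim_seq_const.
have [N0 HN0] := sq_unb 1.
exists N0 => N /leP hN; have := HN0 N hN => hs.
have hsq := sq_sq N.
have s1 : 1 <= INR (sq N) by apply: (le_INR 1); apply/leP.
have hN2 : INR (sq N) * INR (sq N) <= INR N by rewrite -mult_INR; apply: le_INR; apply/leP.
have Np : 0 < INR N by nra.
split; first by apply: Rmult_le_pos; [apply: pos_INR|apply: Rlt_le; apply: Rinv_0_lt_compat].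
apply: (Rmult_le_reg_r (INR N * INR (sq N))); first nra.
field_simplify; try lra.
Qed.

Lemma lim_c_N c : is_lim_seq (fun N => c / INR N) 0.
Proof.
have := is_lim_seq_scal_l _ c _ (is_lim_seq_inv _ _ is_lim_seq_INR ltac:(discriminate)).
by rewrite /= Rmult_0_r.
Qed.

Lemma lim_pow (u : nat -> R) (l : R) (k : nat) : is_lim_seq u l -> is_lim_seq (fun n => u n ^ k) (l ^ k).
Proof.
move=> h; elim: k => [|k IH]; first exact: is_lim_seq_const.
change (l ^ k.+1) with (l * l ^ k).
apply: (is_lim_seq_ext (fun n => u n * u n ^ k)) => //.
exact: (is_lim_seq_mult' _ _ _ _ h IH).
Qed.

Lemma leR (m n : nat) : (m <= n)%nat -> INR m <= INR n.
Proof. by move/leP; apply: le_INR. Qed.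

Lemma ratio_le a b c d : 0 < b -> 0 < d -> a * d <= c * b -> a / b <= c / d.
Proof.
move=> b0 d0 h.
have e : a / b - c / d = - ((c * b - a * d) * / (b * d)) by field; lra.
have i0 : 0 < / (b * d) by apply: Rinv_0_lt_compat; nra.
have : 0 <= (c * b - a * d) * / (b * d).
  apply: Rmult_le_pos; lra.
lra.
Qed.

Lemma pow_div x y k : 0 < y -> (x / y) ^ k = x ^ k / y ^ k.
Proof. by move=> y0; rewrite /Rdiv Rpow_mult_distr pow_inv. Qed.

Lemma final (f W : nat -> nat) (w E : R) (k F : nat) :
  0 < w -> 0 <= E ->
  (forall N, W N.+1 = W N + f N.+1)%nat ->
  (forall n r, (F <= r)%nat -> (f n <= f (n + r))%nat) ->
  (forall N, INR (W N) <= w * (INR N + E) ^ k.+1) ->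
  (forall N, w * pos (INR N - E) ^ k.+1 <= INR (W N)) ->
  is_lim_seq (fun n => INR (f n) / (INR k.+1 * w * INR n ^ k)) 1.
Proof.
move=> w0 E0 WS mono Wup Wlo.
have step1 : forall N M, (W (N + F) + M * f N <= W (N + F + M))%nat.
  move=> N; elim=> [|M IH]; first by rewrite mul0n !addn0.
  rewrite addnS WS mulSn.
  have h : (f N <= f (N + F + M).+1)%nat.
    by have := mono N (F + M).+1 ltac:(lia); rewrite addnS addnA.
  lia.
have step2 : forall Y M N, (Y + M + F <= N)%nat -> (W (Y + M) <= W Y + M * f N)%nat.
  move=> Y; elim=> [|M IH] N h; first by rewrite addn0 mul0n addn0.
  rewrite addnS WS mulSn.
  have h1 : (f (Y + M).+1 <= f N)%nat.
    have := mono (Y + M).+1 (N - (Y + M).+1)%nat ltac:(lia).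
    by rewrite subnKC //; lia.
  have := IH N ltac:(lia); lia.
set K := INR k.+1 * w.
have k1 : 0 < INR k.+1 by apply: lt_0_INR; lia.
have K0 : 0 < K by rewrite /K; nra.
set U := fun N => (1 + 2 * E * / INR (sq N)) * (1 + ((INR F + E) / INR N + INR (sq N) / INR N)) ^ k.
set L := fun N => (1 - 2 * E * / INR (sq N)) * (1 - (INR F / INR N + INR (sq N) / INR N)) ^ k.
have LU : is_lim_seq U 1.
  have h := is_lim_seq_mult' _ _ _ _
    (is_lim_seq_plus' _ _ _ _ (is_lim_seq_const 1) (is_lim_seq_mult' _ _ _ _ (is_lim_seq_const (2 * E)) lim_inv_sq))
    (lim_pow (k := k) (is_lim_seq_plus' _ _ _ _ (is_lim_seq_const 1) (is_lim_seq_plus' _ _ _ _ (lim_c_N (INR F + E)) lim_sq_N))).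
  rewrite (_ : (1 + 2 * E * 0) * (1 + (0 + 0)) ^ k = 1) in h; last by rewrite Rplus_0_r !Rmult_0_r !Rplus_0_r pow1; ring.
  exact: h.
have LL : is_lim_seq L 1.
  have h := is_lim_seq_mult' _ _ _ _
    (is_lim_seq_minus' _ _ _ _ (is_lim_seq_const 1) (is_lim_seq_mult' _ _ _ _ (is_lim_seq_const (2 * E)) lim_inv_sq))
    (lim_pow (k := k) (is_lim_seq_minus' _ _ _ _ (is_lim_seq_const 1) (is_lim_seq_plus' _ _ _ _ (lim_c_N (INR F)) lim_sq_N))).
  rewrite (_ : (1 - 2 * E * 0) * (1 - (0 + 0)) ^ k = 1) in h; last by rewrite Rplus_0_r !Rmult_0_r Rminus_0_r pow1; ring.
  exact: h.
apply: (is_lim_seq_le_le_loc L _ U) => //.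
have [mE hmE] := arch (2 * E).
have [N1 HN1] := sq_unb (mE + 2).
exists (N1 + 2 * F)%nat => N /leP hN.
have hs := HN1 N ltac:(lia).
set M := sq N in hs *.
have hMM := sq_sq N; rewrite -/M in hMM.
have NFM : (F + M <= N)%nat by nia.
have MN : (M <= N)%nat by lia.
have Mr : INR mE + 2 <= INR M by have := leR hs; rewrite INR_addn.
have Nr : INR M <= INR N := leR MN.
have M0 : 0 < INR M by lra.
have N0 : 0 < INR N by lra.
have Nk : 0 < INR N ^ k by apply: pow_lt.
have Fr := pos_INR F.
split.
-
  have h2 := leR (step2 (N - F - M)%nat M N ltac:(lia)).
  rewrite (_ : (N - F - M + M = N - F)%nat) in h2; last by lia.
  rewrite INR_addn INR_muln in h2.
  have hW1 := Wlo (N - F)%nat; have hW2 := Wup (N - F - M)%nat.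
  rewrite !INR_subn in hW1 hW2 *; try lia.
  set y := INR N - INR F - E in hW1.
  set z := INR N - INR F - INR M + E in hW2.
  have x0 : 0 <= INR N - INR F - INR M by have := leR NFM; rewrite INR_addn; lra.
  have Hz : 0 <= z <= y by rewrite /z /y; lra.
  set x := INR N - INR F - INR M in x0 *.
  rewrite posE in hW1; last by lra.
  have I := I3 k Hz.
  have zx : z = x + E by rewrite /z /x; ring.
  have xz : x ^ k <= z ^ k by apply: pow_incr; lra.
  have ME : 0 <= INR M - 2 * E by lra.
  have Hf : K * ((INR M - 2 * E) * x ^ k) <= INR M * INR (f N).
    have : (INR M - 2 * E) * x ^ k <= (y - z) * z ^ k.
      have -> : y - z = INR M - 2 * E by rewrite /y /z; ring.
      by apply: Rmult_le_compat_l.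
    rewrite /K => H.
    have H' := Rmult_le_compat_l (INR k.+1 * w) _ _ (ltac:(nra)) H.
    have I' := Rmult_le_compat_l w _ _ (Rlt_le _ _ w0) I.
    lra.
  have -> : L N = (INR M - 2 * E) * x ^ k / (INR M * INR N ^ k).
    rewrite /L -/M.
    have -> : 1 - (INR F / INR N + INR M / INR N) = x / INR N by rewrite /x; field; lra.
    rewrite pow_div //; field; split; lra.
  apply: ratio_le; try nra.
-
  have h1 := leR (step1 N M).
  rewrite !INR_addn INR_muln in h1.
  have hW1 := Wup (N + F + M)%nat; have hW2 := Wlo (N + F)%nat.
  rewrite !INR_addn in hW1 hW2.
  set y := INR N + INR F + INR M + E in hW1.
  set z := INR N + INR F - E in hW2.
  have Hz : 0 <= z <= y by rewrite /z /y; lra.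
  rewrite posE in hW2; last by lra.
  have I := I2 k Hz.
  have Hf : INR M * INR (f N) <= K * ((INR M + 2 * E) * y ^ k).
    have -> : INR M + 2 * E = y - z by rewrite /y /z; ring.
    rewrite /K; nra.
  have -> : U N = (INR M + 2 * E) * y ^ k / (INR M * INR N ^ k).
    rewrite /U -/M.
    have -> : 1 + ((INR F + E) / INR N + INR M / INR N) = y / INR N by rewrite /y; field; lra.
    rewrite pow_div //; field; split; lra.
  apply: ratio_le; try nra.
Qed.

Definition Pr (A : seq nat) : R := foldr (fun a p => INR a * p) 1 A.
Definition Sg (A : seq nat) : R := foldr (fun a s => / INR a + s) 0 A.

Lemma Pr_pos A : all (fun a => 0 < a)%nat A -> 0 < Pr A.
Proof.
elim: A => [|a A IH] /=; first lra.
case/andP => a0 apos; have := IH apos; have := INR_pos a0; rewrite /Pr /=; nra.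
Qed.

Lemma Sg_ge0 A : all (fun a => 0 < a)%nat A -> 0 <= Sg A.
Proof.
elim: A => [|a A IH] /=; first by rewrite /Sg /=; lra.
case/andP => a0 apos; have := IH apos; have := INR_pos a0 => h.
have := Rinv_0_lt_compat _ h; rewrite /Sg /=; lra.
Qed.

Lemma consts A : all (fun a => 0 < a)%nat A ->
  cA A * INR (size A)`! * Pr A = 1 /\ wA A * INR (size A).+1`! * Pr A = Sg A.
Proof.
elim: A => [|a A IH]; first by rewrite /Pr /Sg /=; split; ring.
case/andP => a0 apos; case: (IH apos) => h1 h2.
have ap := INR_pos a0.
set k := size A in h1 h2 *.
have k1 : 0 < INR k.+1 by apply: lt_0_INR; lia.
have k2 : 0 < INR k.+2 by apply: lt_0_INR; lia.
change (cA A / (INR a * INR k.+1) * INR k.+1`! * (INR a * Pr A) = 1 /\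
  (wA A + cA A / (INR a * INR k.+1)) / (INR a * INR k.+2) * INR k.+2`! * (INR a * Pr A) = / INR a + Sg A).
rewrite (factS k.+1) (factS k) !INR_muln.
split.
  rewrite -h1; field; lra.
rewrite -h2.
have -> : / INR a = cA A * INR k`! * Pr A / INR a by rewrite h1; field; lra.
rewrite factS INR_muln; field; lra.
Qed.

Theorem theorem8 (A : seq nat) :
  uniq A ->
  all (fun a => 0 < a)%nat A ->
  gcd_seq A = 1%nat ->
  is_lim_seq
    (fun n : nat => (INR (Np A n) / (leading_const A * INR n ^ size A))%R)
    1%R.
Proof.
move=> _ apos g1.
case: (frob apos g1) => F HF.
have [IC IW] := invariant apos.
have [c0 w0] := cA_wA_ge0 apos.
have [h1 h2] := consts apos.
have P0 := Pr_pos apos.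
have Anil : A <> [::] by move=> e; rewrite e in g1.
have Sg0 : 0 < Sg A.
  case: A Anil apos {IC IW c0 w0 h1 h2 P0 g1 HF} => [//|a A' _] /=.
  case/andP => a0 apos; have := Sg_ge0 apos; have := Rinv_0_lt_compat _ (INR_pos a0).
  rewrite /Sg /=; lra.
have fk : 0 < INR (size A).+1`! by apply: lt_0_INR; apply/ltP; apply: fact_gt0.
have fk' : 0 < INR (size A)`! by apply: lt_0_INR; apply/ltP; apply: fact_gt0.
have wpos : 0 < wA A.
  case: (Rle_lt_or_eq_dec _ _ w0) => // e; rewrite -e in h2; lra.
have LC : leading_const A = INR (size A).+1 * wA A.
  rewrite /leading_const -/(Sg A) -/(Pr A) -h2 factS INR_muln.
  field; lra.
have := final (f := Np A) (W := wcum A) (F := F) (k := size A) wpos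
  (ltac:(have := pos_INR (sumn A); lra) : 0 <= 2 * INR (sumn A))
  (fun N => Np_wcumS N apos)
  (fun n r h => Np_mono n apos (HF r h))
  (fun N => proj2 (IW N)) (fun N => proj1 (IW N)).
by apply: is_lim_seq_ext => n; rewrite LC.
Qed.
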